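(* The conditional operation is not smooth in the variety of conditional algebras: there exist a conditional algebra $\langle A,\to\rangle$ and sets $U,V\subseteq\mathrm{Ul}(A)$ such that $U\to^{\sigma}V\neq U\to^{\pi}V$.
   Context: A conditional algebra is a pair $\langle A,\to\rangle$ where $A$ is a Boolean algebra and $\to$ is a binary operation on $A$ such that for all $a,b,c$: $a\to 1=1$; $(a\to b)\wedge(a\to c)=a\to(b\wedge c)$; $(a\vee b)\to c\le (a\to c)\wedge(b\to c)$. $\mathrm{Ul}(A)$ carries the Stone topology with basic clopens $\varphi(a)=\{u:a\in u\}$. For $U,V\subseteq\mathrm{Ul}(A)$: the $\pi$-extension is $U\to^{\pi}V=\bigcap_{(Y,O)}\bigcup\{\varphi(a\to b): Y\subseteq\varphi(a),\ \varphi(b)\subseteq O\}$ over closed $Y\subseteq U$ and open $O\supseteq V$; the $\sigma$-extension is $U\to^{\sigma}V=\bigcup_{(O,Y)}\bigcap\{\varphi(a\to b): \varphi(a)\subseteq O,\ Y\subseteq\varphi(b)\}$ over open $O\supseteq U$ and closed $Y\subseteq V$. The operation is smooth if these always coincide. *)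

(* Defs.v *)
(* Boolean algebras are ctbDistrLatticeType's (order.v). *)
From mathcomp Require Import all_boot all_order.
Set Implicit Arguments. Unset Strict Implicit. Unset Printing Implicit Defensive.
Import Order.TTheory.
Local Open Scope order_scope.

Section Conditional.
Context {disp : Order.disp_t} {A : ctbDistrLatticeType disp}.

Definition conditional_algebra (imp : A -> A -> A) : Prop :=
  [/\ forall a, imp a \top = \top,
      forall a b c, Order.meet (imp a b) (imp a c) = imp a (Order.meet b c)
    & forall a b c, imp (Order.join a b) c <= Order.meet (imp a c) (imp b c)].

Definition is_ultrafilter (u : A -> Prop) : Prop :=
  [/\ ~ u \bot,
      u \top,
      forall a b, u a -> a <= b -> u b,
      forall a b, u a -> u b -> u (Order.meet a b)
    & forall a, u a \/ u (~` a)].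

Definition Ul := {u : A -> Prop | is_ultrafilter u}.

Definition phi (a : A) : Ul -> Prop := fun u => proj1_sig u a.

Definition subS (X Y : Ul -> Prop) : Prop := forall u, X u -> Y u.

Definition stone_open (O : Ul -> Prop) : Prop :=
  forall u, O u -> exists a, phi a u /\ subS (phi a) O.

Definition stone_closed (Y : Ul -> Prop) : Prop :=
  stone_open (fun u => ~ Y u).

Definition pi_ext (imp : A -> A -> A) (U V : Ul -> Prop) : Ul -> Prop :=
  fun u => forall Y O, stone_closed Y -> subS Y U -> stone_open O -> subS V O ->
    exists a b, subS Y (phi a) /\ subS (phi b) O /\ phi (imp a b) u.

Definition sigma_ext (imp : A -> A -> A) (U V : Ul -> Prop) : Ul -> Prop :=
  fun u => exists O Y, stone_open O /\ subS U O /\ stone_closed Y /\ subS Y V /\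
    forall a b, subS (phi a) O -> subS Y (phi b) -> phi (imp a b) u.

End Conditional.

(* Main.v *)
Require Import Defs.
From mathcomp Require Import all_boot all_order.
From mathcomp Require Import boolp classical_sets filter.
Import Order.TTheory.
Set Implicit Arguments. Unset Strict Implicit.
Local Open Scope classical_set_scope.

Definition isU {X} (u : set X -> Prop) := @is_ultrafilter set_display (set X) u.

Lemma mkU X (u : set X -> Prop) :
  ~ u set0 -> u setT -> (forall a b, u a -> a `<=` b -> u b) ->
  (forall a b, u a -> u b -> u (a `&` b)) -> (forall a, u a \/ u (~` a)) ->
  isU u.
Proof.
move=> h0 hT hS hI hC; split => //.
by move=> a b ua /subsetPset; apply: hS.
Qed.


Lemma u0 X (u : set X -> Prop) : isU u -> ~ u set0.
Proof. by case. Qed.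
Lemma uT X (u : set X -> Prop) : isU u -> u setT.
Proof. by case. Qed.
Lemma uS X (u : set X -> Prop) : isU u -> forall a b, u a -> a `<=` b -> u b.
Proof. by case=> _ _ hS _ _ a b ua ab; apply: (hS a b ua); apply/subsetPset. Qed.
Lemma uI X (u : set X -> Prop) : isU u -> forall a b, u a -> u b -> u (a `&` b).
Proof. by case. Qed.
Lemma uC X (u : set X -> Prop) : isU u -> forall a, u a \/ u (~` a).
Proof. by case. Qed.

Lemma uex X (u : set X -> Prop) : isU u -> forall a, u a -> exists t, a t.
Proof.
move=> hu a ua; apply: contrapT => hn; apply: (u0 hu); apply: (uS hu ua).
by move=> t at0; apply: hn; exists t.
Qed.

Lemma uU X (u : set X -> Prop) : isU u -> forall a b, u (a `|` b) -> u a \/ u b.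
Proof.
move=> hu a b uab; case: (uC hu a) => [|na]; first by left.
case: (uC hu b) => [|nb]; first by right.
have := uI hu (uI hu na nb) uab => /(uex hu) [t [[+ +] ]].
by move=> /= h1 h2 [].
Qed.

Lemma uprin X (u : set X -> Prop) : isU u -> forall t, u [set t] ->
  forall z, u z <-> z t.
Proof.
move=> hu t ut z; split.
  by move=> uz; have [s [zs <-]] := uex hu (uI hu uz ut).
by move=> zt; apply: (uS hu ut) => s ->.
Qed.

Lemma pushU X Y (f : X -> Y) (u : set X -> Prop) : isU u ->
  isU (fun z => u (f @^-1` z)).
Proof.
move=> hu; apply: mkU.
- by apply: u0 hu.
- by apply: uT hu.
- by move=> a b ua ab; apply: (uS hu ua) => x /ab.
- by move=> a b ua ub; apply: uI.
- by move=> a; exact: (uC hu (f @^-1` a)).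
Qed.

Lemma sumU Y (v : set nat -> Prop) (us : nat -> set Y -> Prop) : isU v ->
  (forall m, isU (us m)) -> isU (fun z => v [set m | us m z]).
Proof.
move=> hv hus; apply: mkU.
- by move=> h; apply: (u0 hv); apply: (uS hv h) => m /= /(u0 (hus m)).
- by apply: (uS hv (uT hv)) => m _; apply: uT.
- by move=> a b ua ab; apply: (uS hv ua) => m /= h; apply: (uS (hus m) h).
- by move=> a b ua ub; apply: (uS hv (uI hv ua ub)) => m [/= h1 h2]; apply: uI.
- move=> a; case: (uC hv [set m | us m a]) => h; first by left.
  right; apply: (uS hv h) => m /= h1; case: (uC (hus m) a) => //.
Qed.

Lemma push_np X Y (f : X -> Y) (u : set X -> Prop) : isU u -> injective f ->
  (forall x, ~ u [set x]) -> forall y, ~ u (f @^-1` [set y]).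
Proof.
move=> hu fi hnp y h; case: (pselect (exists x, f x = y)) => [[x fx]|nx].
  by apply: (hnp x); apply: (uS hu h) => x' /= fx'; apply: fi; rewrite fx fx'.
by apply: (u0 hu); apply: (uS hu h) => x' /= fx'; apply: nx; exists x'.
Qed.

Lemma exists_v : exists v : set nat -> Prop, isU v /\ forall m, ~ v [set m].
Proof.
have [G [GU sub]] := ultraFilterLemma (@eventually_filter).
exists G; split.
  apply: mkU.
  - exact: filter_not_empty.
  - exact: filterT.
  - by move=> a b Ga ab; apply: filterS Ga.
  - by move=> a b; apply: filterI.
  - by move=> a; apply: in_ultra_setVsetC.
move=> m Gm.
have : G (~` [set m]).
  apply: sub; exists m.+1 => // n /= mn nm; by move: mn; rewrite nm ltnn.
move=> /(filterI Gm); rewrite setICr; exact: filter_not_empty.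
Qed.

Definition v : set nat -> Prop := proj1_sig (cid exists_v).
Lemma vU : isU v. Proof. exact: (proj1 (proj2_sig (cid exists_v))). Qed.
Lemma vnp m : ~ v [set m]. Proof. exact: (proj2 (proj2_sig (cid exists_v))). Qed.

Definition T := (nat + nat * nat)%type.
Definition wn (n : nat) (z : set T) : Prop := v ((fun k => inr (n, k)) @^-1` z).
Definition vI (z : set T) : Prop := v (inl @^-1` z).
Definition w (z : set T) : Prop := v [set m | wn m z].

Lemma wnU n : isU (wn n). Proof. exact: pushU vU. Qed.
Lemma vIU : isU vI. Proof. exact: pushU vU. Qed.
Lemma wU_ : isU w. Proof. exact: sumU vU wnU. Qed.

Lemma wn_np n t : ~ wn n [set t].
Proof.
have fi : injective (fun k : nat => (@inr nat _ (n, k) : T)) by move=> k1 k2 [].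
move=> h; exact: (push_np vU fi vnp h).
Qed.
Lemma vI_np t : ~ vI [set t].
Proof.
have fi : injective (fun k : nat => (@inl nat (nat * nat) k : T)) by move=> k1 k2 [].
move=> h; exact: (push_np vU fi vnp h).
Qed.
Lemma w_np t : ~ w [set t].
Proof. by move=> h; apply: (u0 vU); apply: (uS vU h) => m /= /wn_np. Qed.

Definition col n : set T := [set t | exists k, t = inr (n, k)].
Lemma wn_col n : wn n (col n).
Proof. by apply: (uS vU (uT vU)) => k _ /=; exists k. Qed.
Lemma w_col n : ~ w (col n).
Proof.
move=> h; apply: (@vnp n); apply: (uS vU h) => m /= hm.
apply: contrapT => mn; apply: (u0 vU); apply: (uS vU hm) => k /= [k' [e _]].
by apply: mn; rewrite e.
Qed.
Lemma vI_inl : vI (range inl).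
Proof. by apply: (uS vU (uT vU)) => k _ /=; exists k. Qed.
Lemma w_inl : ~ w (range inl).
Proof.
move=> h; apply: (u0 vU); apply: (uS vU h) => m /= hm.
by apply: (u0 vU); apply: (uS vU hm) => k /= [k' _].
Qed.

Notation UlT := (@Ul set_display (set T)).
Definition sv (x : UlT) : set T -> Prop := proj1_sig x.
Lemma svU (x : UlT) : isU (sv x). Proof. exact: (proj2_sig x). Qed.

Definition bad (a : set T) := w a /\ exists n, a (inl n) /\ wn n a.
Definition imp (a b : set T) : set T :=
  if `[< b = setT >] then setT else if `[< bad a >] then set0 else setT.

Definition wnX n : UlT := exist _ (wn n) (wnU n).
Definition vIX : UlT := exist _ vI vIU.
Definition wX : UlT := exist _ w wU_.

Definition UU (x : UlT) : Prop :=
  (exists t, forall z, sv x z <-> z t) \/ (forall z, sv x z <-> w z).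
Definition VV (x : UlT) : Prop := False.

Lemma notU x : (forall t, ~ sv x [set t]) -> (exists z, sv x z /\ ~ w z) -> ~ UU x.
Proof.
move=> np [z [xz nwz]] [[t ht]|hw].
  by apply: (np t); apply/ht.
by apply: nwz; apply/hw.
Qed.

Lemma set0_neq : (set0 : set T) <> setT.
Proof. by move=> e; have : (setT : set T) (inl 0) by []; rewrite -e. Qed.

Lemma imp_good a : ~ bad a -> imp a set0 = setT.
Proof.
move=> nb; rewrite /imp; case: (asboolP (set0 = setT)) => // _.
by case: (asboolP (bad a)).
Qed.

Lemma imp_bad a : bad a -> imp a set0 = set0.
Proof.
move=> ba; rewrite /imp; case: (asboolP (set0 = setT)) => [e|_].
  by exfalso; apply: set0_neq.
by case: (asboolP (bad a)).
Qed.

Lemma bad_up a b : a `<=` b -> bad a -> bad b.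
Proof.
move=> ab [wa [n [an wna]]]; split; first exact: (uS wU_ wa).
exists n; split; first exact: ab.
exact: (uS (wnU n) wna).
Qed.

Lemma setI_T (b c : set T) : b `&` c = setT -> b = setT /\ c = setT.
Proof.
move=> e; have h t : (b `&` c) t by rewrite e.
by split; apply/seteqP; split => // t _; case: (h t).
Qed.

Lemma imp_cond : @conditional_algebra set_display (set T) imp.
Proof.
split.
- by move=> a; rewrite /imp asboolT.
- move=> a b c; rewrite meetEset /imp.
  case: (asboolP (b `&` c = setT)) => [hbc|hbc].
    have [eb ec] := setI_T hbc; rewrite eb ec.
    by rewrite asboolT // setIid.
  case: (asboolP (b = setT)) => [hb|hb]; case: (asboolP (c = setT)) => [hc|hc].
  + by exfalso; apply: hbc; rewrite hb hc setIid.
  + by rewrite setTI.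
  + by rewrite setIT.
  + by rewrite setIid.
- move=> a b c; rewrite joinEset meetEset; apply/subsetPset; rewrite /imp.
  case: (asboolP (c = setT)) => [_|nc]; first by rewrite setIid.
  case: (asboolP (bad (a `|` b))) => [_|nab]; first exact: sub0set.
  case: (asboolP (bad a)) => [ba|_].
    by exfalso; apply: nab; apply: bad_up ba => t; left.
  case: (asboolP (bad b)) => [bb|_].
    by exfalso; apply: nab; apply: bad_up bb => t; right.
  by rewrite setIid.
Qed.

Lemma pi_all (u : UlT) : @pi_ext set_display (set T) imp UU VV u.
Proof.
move=> Y O Yc YU Oo VO.
suff [a [Ya ga]] : exists a, subS Y (@phi set_display (set T) a) /\ ~ bad a.
  exists a, set0; split => //; split.
  - by move=> x h; exfalso; exact: (u0 (svU x) h).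
  - rewrite /phi imp_good //; exact: (uT (svU u)).
case: (asboolP (Y wX)) => [Yw|nYw]; last first.
  have [c [wc cY]] := Yc wX nYw.
  exists (~` c); split.
    move=> x Yx; case: (uC (svU x) c) => // xc; exfalso; exact: (cY x xc Yx).
  move=> [wnc _]; apply: (u0 wU_); have := uI wU_ wc wnc; by rewrite setICr.
pose D := [set t | exists x, Y x /\ forall z, sv x z <-> z t].
have hwn : forall n, ~ wn n D.
  move=> n hD.
  have nY : ~ Y (wnX n).
    move=> /YU; apply: notU; first exact: wn_np.
    exists (col n); split; [exact: wn_col | exact: w_col].
  have [c [wc cY]] := Yc _ nY.
  have [t [ct [x [Yx hx]]]] := uex (wnU n) (uI (wnU n) wc hD).
  by apply: (cY x) => //; apply/hx.
pose DI := [set n | D (inl n)].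
have hv : v (~` DI).
  have nY : ~ Y vIX.
    move=> /YU; apply: notU; first exact: vI_np.
    exists (range inl); split; [exact: vI_inl | exact: w_inl].
  have [c [vc cY]] := Yc _ nY.
  apply: (uS vU vc) => n /= cn [x [Yx hx]].
  by apply: (cY x) => //; apply/hx.
pose s : set T := [set t | exists n k, t = inr (n, k) /\ ~ DI n].
have ws : w s.
  apply: (uS vU hv) => m /= hm; apply: (uS vU (uT vU)) => k _ /=.
  by exists m, k.
exists (D `|` s); split.
  move=> x Yx; case: (YU x Yx) => [[t ht]|hw].
    by apply/ht; left; exists x.
  by apply/hw; apply: (uS wU_ ws) => t st; right.
move=> [_ [n [hn wna]]].
have DIn : DI n by case: hn => // -[n' [k [] ]].
apply: (hwn n); apply: (uS vU wna) => k /= [//|[n' [k' [e ndi]]]].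
by case: e => e1 _; rewrite -e1 in ndi.
Qed.

Lemma sigma_none (u : UlT) : ~ @sigma_ext set_display (set T) imp UU VV u.
Proof.
move=> [O [Y [Oo [UO [Yc [YV H]]]]]].
have [c [wc cO]] := Oo wX (UO wX (or_intror (fun z => conj id id))).
have [n wnc] := uex vU wc.
pose a := c `|` [set inl n].
have ba : bad a.
  split; first by apply: (uS wU_ wc) => t ct; left.
  exists n; split; first by right.
  by apply: (uS (wnU n) wnc) => t ct; left.
have := H a set0.
rewrite /phi imp_bad //.
move=> h; apply: (u0 (svU u)); apply: h.
- move=> x xa; case: (uU (svU x) xa) => hx; first exact: cO.
  apply: UO; left; exists (inl n); exact: (uprin (svU x) hx).
- by move=> x /YV.
Qed.

Theorem theorem2p17 :
  exists (d : Order.disp_t) (A : ctbDistrLatticeType d) (imp : A -> A -> A),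
    conditional_algebra imp /\
    exists U V : @Ul d A -> Prop, sigma_ext imp U V <> pi_ext imp U V.
Proof.
exists set_display, (set T : ctbDistrLatticeType _), imp; split.
  exact: imp_cond.
exists UU, VV => E.
have u0p : isU (fun z : set T => z (inl 0)).
  apply: mkU => //.
  - by move=> a b ha ab; apply: ab.
  - by move=> a; case: (pselect (a (inl 0))) => h; [left|right].
pose x0 : UlT := exist _ _ u0p.
have := pi_all x0; rewrite -E; exact: sigma_none.
Qed.
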